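(* Let $\mathbb{K}$ be a field of characteristic different from $2$, let $d\ge 1$, and let $V,W$ be finite-dimensional $\mathbb{K}$-vector spaces with $\dim_{\mathbb K}V=N$ and $\dim_{\mathbb K}W=M$. Let $A(\xi):V\to W$, $\xi\in\mathbb{K}^d$, be a homogeneous symbol of degree $k$, i.e. in fixed bases $A(\xi)$ is an $M\times N$ matrix whose entries are homogeneous polynomials of degree $k$ in $\mathbb{K}[\xi_1,\dots,\xi_d]$; denote its columns by $a_1(\xi),\dots,a_N(\xi)\in W$. Assume that there is an integer $r\ge 0$ with $\operatorname{rank}_{\mathbb K}A(\xi)=r$ for all $\xi\in\mathbb{K}^d\setminus\{0\}$. Let $X:=\left(\bigwedge^{r+1}W\right)^{\binom{N}{r}}$ (with the convention $\binom{M}{M+1}=0$, so $X=\{0\}$ if $r=M$), and define $Q(\xi):W\to X$ by $$Q(\xi)(w):=\big(a_{i_1}(\xi)\wedge\cdots\wedge a_{i_r}(\xi)\wedge w\big)_{1\le i_1<\cdots<i_r\le N}.$$ Then $Q(\xi)$ is a homogeneous symbol on $\mathbb{K}^d$ such that: (1) if $r<\dim W$, the order (degree in $\xi$) of $Q(\xi)$ is $rk$; (2) if $r=M$, then $X=\{0\}$ and $Q(\xi)$ is the zero operator; (3) in either case, $\operatorname{im}A(\xi)=\ker Q(\xi)$ for all nonzero $\xi\in\mathbb{K}^d$.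
   Context: For a vector space $W$ and $r\le \dim W$, $\bigwedge^{r}W$ denotes the $r$-fold exterior power, spanned inside $W^{\otimes r}$ by $m_1\wedge\cdots\wedge m_r:=\sum_{\sigma\in S_r}\operatorname{sign}(\sigma)\,m_{\sigma(1)}\otimes\cdots\otimes m_{\sigma(r)}$. *)

(* Defs.v *)
From HB Require Import structures.
From mathcomp Require Import all_boot all_order all_algebra.
From mathcomp Require Import fingroup perm.
From mathcomp Require Import mpoly.
Set Implicit Arguments. Unset Strict Implicit. Unset Printing Implicit Defensive.
Import GRing.Theory.
Local Open Scope ring_scope.

(* The tensor power W^{(x) r} is represented by its coordinates in the
   standard product basis: functions {ffun 'I_r -> 'I_M} -> K, the
   coordinate of m_1 (x) ... (x) m_r at the multi-index f being
   prod_j m_j (f j). *)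

(* m_1 /\ ... /\ m_r := sum_{s in S_r} sign(s) m_{s(1)} (x) ... (x) m_{s(r)} *)
Definition wedge (K : fieldType) (M r : nat) (m : 'I_r -> 'cV[K]_M)
  : {ffun {ffun 'I_r -> 'I_M} -> K} :=
  [ffun f : {ffun 'I_r -> 'I_M} => \sum_(s : 'S_r) (-1) ^+ s * \prod_(j < r) m (s j) (f j) 0].

Definition incr (r N : nat) (i : {ffun 'I_r -> 'I_N}) : bool :=
  [forall j : 'I_r, forall j' : 'I_r, (j < j')%N ==> (i j < i j')%N].

Definition incr_idx (r N : nat) := {i : {ffun 'I_r -> 'I_N} | incr i}.

Definition symb_eval (K : fieldType) (d M N : nat)
  (A : 'M[{mpoly K[d]}]_(M, N)) (xi : 'rV[K]_d) : 'M[K]_(M, N) :=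
  map_mx (meval (fun j => xi 0 j)) A.

Definition Qargs (K : fieldType) (M N r : nat) (B : 'M[K]_(M, N))
  (i : {ffun 'I_r -> 'I_N}) (w : 'cV[K]_M) (j : 'I_r.+1) : 'cV[K]_M :=
  match unlift ord_max j with
  | Some j' => col (i j') B
  | None => w
  end.

(* Q(xi)(w) := (a_{i_1}(xi) /\ ... /\ a_{i_r}(xi) /\ w)_{i_1 < ... < i_r},
   an element of X = (Lambda^{r+1} W)^{binom N r} (inside (W^{(x) r+1})^{binom N r}) *)
Definition Qop (K : fieldType) (d M N : nat) (A : 'M[{mpoly K[d]}]_(M, N))
  (r : nat) (xi : 'rV[K]_d) (w : 'cV[K]_M)
  : {ffun incr_idx r N -> {ffun {ffun 'I_r.+1 -> 'I_M} -> K}} :=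
  [ffun i => wedge (Qargs (symb_eval A xi) (val i) w)].

(* Main.v *)
Require Import Defs.
From HB Require Import structures.
From mathcomp Require Import all_boot all_order all_algebra.
From mathcomp Require Import fingroup perm.
From mathcomp Require Import mpoly.
Set Implicit Arguments. Unset Strict Implicit. Unset Printing Implicit Defensive.
Import Order.TTheory GRing.Theory.
Local Open Scope ring_scope.

Section Helpers.
Variable K : fieldType.

Definition colmx (M n : nat) (m : 'I_n -> 'cV[K]_M) : 'M[K]_(M, n) :=
  \matrix_(i, l) m l i 0.

Lemma wedgeE M n (m : 'I_n -> 'cV[K]_M) f :
  wedge m f = \det (rowsub f (colmx m)).
Proof.
rewrite ffunE /determinant; apply: eq_bigr => s _; congr (_ * _).
by apply: eq_bigr => j _; rewrite !mxE.
Qed.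

Lemma wedge0P M n (m : 'I_n -> 'cV[K]_M) :
  wedge m = 0 <-> (\rank (colmx m) < n)%N.
Proof.
split=> [h | h].
  rewrite ltnNge; apply/negP => hr.
  have fC : row_full (colmx m) by rewrite /row_full eqn_leq rank_leq_col hr.
  have := fullrowsub_unit fC; rewrite unitmxE unitfE -wedgeE h ffunE eqxx.
  by [].
apply/ffunP => f; rewrite wedgeE ffunE.
apply/eqP; rewrite -[_ == 0]negbK -unitfE -unitmxE -row_free_unit.
rewrite /row_free neq_ltn; apply/orP; left.
by apply: leq_ltn_trans h; apply: mxrankS; apply: rowsub_sub.
Qed.

Lemma incr_basis N M r (Bt : 'M[K]_(N, M)) : \rank Bt = r ->
  exists i : incr_idx r N, (Bt <= rowsub (val i) Bt)%MS.
Proof.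
move=> hr.
set g := maxrankfun Bt.
set S := [set g j | j : 'I_(\rank Bt)].
have hS : #|S| = r by rewrite card_imset ?card_ord //; apply: maxrankfun_inj.
pose i := [ffun j : 'I_r => Order.enum_val (cast_ord (esym hS) j) : 'I_N].
have hi : incr i.
  apply/forallP => j; apply/forallP => j'; apply/implyP => hjj.
  rewrite !ffunE.
  have := (leW_mono (Order.le_enum_val (@le_total _ 'I_N) (A := S))).
  move=> /(_ (cast_ord (esym hS) j) (cast_ord (esym hS) j')).
  move=> h; exact: (etrans h hjj).
exists (exist _ i hi) => /=.
apply: (submx_trans (_ : (Bt <= rowsub g Bt)%MS)).
  by rewrite /g eq_maxrowsub.
apply/row_subP => j; rewrite row_rowsub.
have gS : g j \in S by apply: imset_f.
set j2 := cast_ord hS (Order.enum_rank_in gS (g j)).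
have -> : g j = i j2.
  by rewrite ffunE /j2 cast_ordK Order.enum_rankK_in.
by rewrite -row_rowsub row_sub.
Qed.

Lemma rowR M n (m : 'I_n -> 'cV[K]_M) l : row l (colmx m)^T = (m l)^T.
Proof. by apply/matrixP => a b; rewrite !mxE (ord1 a). Qed.

End Helpers.

Lemma prod_homog (K : fieldType) d n k (F : 'I_n -> {mpoly K[d]}) :
  (forall i, F i \is k.-homog) -> \prod_(i < n) F i \is (n * k).-homog.
Proof.
elim: n F => [|n IH] F hF; first by rewrite big_ord0 mul0n dhomog1.
rewrite big_ord_recr /= mulSnr; apply: dhomogM; last exact: hF.
exact: IH.
Qed.

Lemma det_homog (K : fieldType) d n k (C : 'M[{mpoly K[d]}]_n) :
  (forall i j, C i j \is k.-homog) -> \det C \is (n * k).-homog.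
Proof.
move=> hC; rewrite /determinant; apply: rpred_sum => s _.
by rewrite rpredMsign; apply: prod_homog.
Qed.


Section Main.
Variable K : fieldType.

Lemma Qop_i d M N (A : 'M[{mpoly K[d]}]_(M, N)) r xi w i :
  Qop A r xi w i = wedge (Qargs (symb_eval A xi) (val i) w).
Proof. by rewrite ffunE. Qed.

Lemma R_lift M N r (B : 'M[K]_(M, N)) (i : {ffun 'I_r -> 'I_N}) w j :
  row (lift ord_max j) (colmx (Qargs B i w))^T = row (i j) B^T.
Proof. by rewrite rowR /Qargs liftK tr_col. Qed.

Lemma R_max M N r (B : 'M[K]_(M, N)) (i : {ffun 'I_r -> 'I_N}) w :
  row ord_max (colmx (Qargs B i w))^T = w^T.
Proof. by rewrite rowR /Qargs unlift_none. Qed.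

Lemma R_sub1 M N r (B : 'M[K]_(M, N)) (i : {ffun 'I_r -> 'I_N}) w :
  (rowsub i B^T <= (colmx (Qargs B i w))^T)%MS.
Proof.
apply/row_subP => j; rewrite row_rowsub -(R_lift B i w); exact: row_sub.
Qed.

Lemma R_sub2 M N r (B : 'M[K]_(M, N)) (i : {ffun 'I_r -> 'I_N}) w :
  (w^T <= (colmx (Qargs B i w))^T)%MS.
Proof. rewrite -(R_max B i); exact: row_sub. Qed.

Lemma R_sub3 M N r (B : 'M[K]_(M, N)) (i : {ffun 'I_r -> 'I_N}) w :
  (w^T <= B^T)%MS -> ((colmx (Qargs B i w))^T <= B^T)%MS.
Proof.
move=> hw; apply/row_subP => l; case: (unliftP ord_max l) => [j ->|->].
  by rewrite R_lift row_sub.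
by rewrite R_max.
Qed.

Lemma part3 d M N r (A : 'M[{mpoly K[d]}]_(M, N)) xi :
  \rank (symb_eval A xi) = r -> forall w : 'cV[K]_M,
  (exists v : 'cV[K]_N, w = symb_eval A xi *m v) <-> Qop A r xi w = 0.
Proof.
set B := symb_eval A xi => hr w; split.
  case=> v ->; apply/ffunP => i; rewrite ffunE ffunE.
  apply/wedge0P; rewrite -mxrank_tr.
  have hs : ((symb_eval A xi *m v)^T <= B^T)%MS by rewrite trmx_mul submxMl.
  apply: (leq_ltn_trans (mxrankS (R_sub3 (val i) hs))).
  by rewrite mxrank_tr hr.
move=> hQ.
have hr' : \rank B^T = r by rewrite mxrank_tr.
have [i hi] := incr_basis hr'.
have : Qop A r xi w i = 0 by rewrite hQ ffunE.
rewrite Qop_i => /wedge0P.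
rewrite -mxrank_tr ltnS => hR.
have hA : \rank (rowsub (val i) B^T) = r.
  apply/eqP; rewrite eqn_leq rank_leq_row /= -{1}hr'; exact: mxrankS.
have hRA : ((colmx (Qargs B (val i) w))^T <= rowsub (val i) B^T)%MS.
  case: (mxrank_leqif_sup (R_sub1 B (val i) w)) => h1 h2.
  by rewrite -h2 eqn_leq h1 hA hR.
have hw : (w^T <= B^T)%MS.
  exact: (submx_trans (R_sub2 B (val i) w) (submx_trans hRA (rowsub_sub _ _))).
case/submxP: hw => D hD; exists D^T.
by rewrite -[w]trmxK hD trmx_mul trmxK.
Qed.

Lemma part1 d M N r (A : 'M[{mpoly K[d]}]_(M, N)) : (0 < d)%N ->
  (forall xi : 'rV[K]_d, xi != 0 -> \rank (symb_eval A xi) = r) ->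
  (r < M)%N -> exists (xi : 'rV[K]_d) (w : 'cV[K]_M), Qop A r xi w != 0.
Proof.
move=> hd hrk hrM.
pose xi : 'rV[K]_d := const_mx 1.
have xi0 : xi != 0.
  apply/eqP => h; have := congr1 (fun x : 'rV[K]_d => x 0 (Ordinal hd)) h.
  by rewrite !mxE => /eqP; rewrite oner_eq0.
set B := symb_eval A xi.
have hr' : \rank B^T = r by rewrite mxrank_tr hrk.
have [i hi] := incr_basis hr'.
have hA : \rank (rowsub (val i) B^T) = r.
  apply/eqP; rewrite eqn_leq rank_leq_row /= -{1}hr'; exact: mxrankS.
have : ~~ ((1%:M : 'M[K]_M) <= rowsub (val i) B^T)%MS.
  apply/negP => /mxrankS; rewrite mxrank1 hA => h.
  by move: hrM; rewrite ltnNge h.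
case/row_subPn => j hj.
exists xi, (row j 1%:M)^T.
apply/eqP => hQ.
have : Qop A r xi (row j 1%:M)^T i = 0 by rewrite hQ ffunE.
rewrite Qop_i => /wedge0P; rewrite -mxrank_tr ltnS => hR.
have hRA : ((colmx (Qargs B (val i) (row j 1%:M)^T))^T <= rowsub (val i) B^T)%MS.
  case: (mxrank_leqif_sup (R_sub1 B (val i) (row j 1%:M)^T)) => h1 h2.
  by rewrite -h2 eqn_leq h1 hA hR.
have := submx_trans (R_sub2 B (val i) (row j 1%:M)^T) hRA.
by rewrite trmxK (negbTE hj).
Qed.

Lemma part2a M (m : 'I_M.+1 -> 'cV[K]_M) : wedge m = 0.
Proof. by apply/wedge0P; rewrite ltnS; exact: rank_leq_row. Qed.

Definition Pm d M N r (A : 'M[{mpoly K[d]}]_(M, N)) (i : incr_idx r N)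
  (f : {ffun 'I_r.+1 -> 'I_M}) : 'M[{mpoly K[d]}]_(r.+1) :=
  \matrix_(j, l) match unlift ord_max l with
                 | Some l' => A (f j) (val i l') | None => 0 end.

Definition Pp d M N r (A : 'M[{mpoly K[d]}]_(M, N)) (i : incr_idx r N)
  (f : {ffun 'I_r.+1 -> 'I_M}) (m : 'I_M) : {mpoly K[d]} :=
  \sum_(j < r.+1 | f j == m) cofactor (Pm A i f) j ord_max.

Lemma Pp_homog d M N k r (A : 'M[{mpoly K[d]}]_(M, N)) :
  (forall i j, A i j \is k.-homog) ->
  forall (i : incr_idx r N) f m, Pp A i f m \is (r * k).-homog.
Proof.
move=> hA i f m; rewrite /Pp; apply: rpred_sum => j _.
rewrite /cofactor rpredMsign; apply: det_homog => a b.
by rewrite !mxE liftK; exact: hA.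
Qed.

Lemma cof_eval d M N r (A : 'M[{mpoly K[d]}]_(M, N)) (xi : 'rV[K]_d)
  (w : 'cV[K]_M) (i : incr_idx r N) (f : {ffun 'I_r.+1 -> 'I_M}) (j : 'I_r.+1) :
  cofactor (rowsub f (colmx (Qargs (symb_eval A xi) (val i) w))) j ord_max
  = (cofactor (Pm A i f) j ord_max).@[fun j => xi 0 j].
Proof.
rewrite /cofactor rmorphM rmorph_sign -det_map_mx; congr (_ * \det _).
apply/matrixP => a b; rewrite !mxE /Qargs liftK.
by rewrite /symb_eval !mxE.
Qed.

Lemma Pp_eval d M N r (A : 'M[{mpoly K[d]}]_(M, N)) (xi : 'rV[K]_d)
  (w : 'cV[K]_M) (i : incr_idx r N) (f : {ffun 'I_r.+1 -> 'I_M}) :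
  Qop A r xi w i f = \sum_(m < M) (Pp A i f m).@[fun j => xi 0 j] * w m 0.
Proof.
rewrite Qop_i wedgeE (expand_det_col _ ord_max).
rewrite (partition_big (fun j => f j) xpredT) //=.
apply: eq_bigr => m _; rewrite /Pp raddf_sum mulr_suml.
apply: eq_bigr => j /eqP hj.
rewrite cof_eval mulrC; congr (_ * _).
by rewrite !mxE /Qargs unlift_none hj.
Qed.

End Main.

Theorem lemma2p1 (K : fieldType) (d M N k r : nat)
    (A : 'M[{mpoly K[d]}]_(M, N)) :
  ~~ (2 \in [pchar K]) ->
  (0 < d)%N ->
  (forall i j, A i j \is k.-homog) ->
  (forall xi : 'rV[K]_d, xi != 0 -> \rank (symb_eval A xi) = r) ->
  (* Q is a homogeneous symbol, with entries homogeneous of degree r*k *)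
  (exists P : incr_idx r N -> {ffun 'I_r.+1 -> 'I_M} -> 'I_M -> {mpoly K[d]},
      (forall i f m, P i f m \is (r * k).-homog) /\
      (forall (xi : 'rV[K]_d) (w : 'cV[K]_M) i f,
          Qop A r xi w i f = \sum_(m < M) (P i f m).@[fun j => xi 0 j] * w m 0))
  (* (1) if r < dim W, Q is a nonzero symbol (so its order is exactly r*k) *)
  /\ ((r < M)%N -> exists (xi : 'rV[K]_d) (w : 'cV[K]_M), Qop A r xi w != 0)
  (* (2) if r = M, X = {0} and Q is the zero operator *)
  /\ (r = M ->
        (forall m : 'I_r.+1 -> 'cV[K]_M, wedge m = 0) /\
        (forall (xi : 'rV[K]_d) (w : 'cV[K]_M), Qop A r xi w = 0))
  (* (3) im A(xi) = ker Q(xi) for xi <> 0 *)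
  /\ (forall xi : 'rV[K]_d, xi != 0 -> forall w : 'cV[K]_M,
        (exists v : 'cV[K]_N, w = symb_eval A xi *m v) <-> Qop A r xi w = 0).
Proof.
move=> _ hd hA hrk; split.
  exists (fun i f m => Pp A i f m); split; first exact: Pp_homog.
  by move=> xi w i f; exact: Pp_eval.
split; first exact: part1.
split.
  move=> hrM; subst r; split; first exact: part2a.
  by move=> xi w; apply/ffunP => i; rewrite Qop_i part2a ffunE.
by move=> xi hxi w; apply: part3; exact: hrk.
Qed.
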